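(* Let $\Gamma\Rightarrow\Delta$ be a sequent. (1) If $\mathsf{G}^c(\mathbf{K}_D)\vdash\Gamma\Rightarrow\Delta$ then $\Gamma\Rightarrow\Delta$ is valid in the class $\mathbb{M}$ of all models. (2) If $\mathsf{G}^c(\mathbf{KD}_D)\vdash\Gamma\Rightarrow\Delta$ then $\Gamma\Rightarrow\Delta$ is valid in $\mathbb{M}_{\mathbf{ser}}$. (3) If $\mathsf{G}^c(\mathbf{KT}_D)\vdash\Gamma\Rightarrow\Delta$ then $\Gamma\Rightarrow\Delta$ is valid in $\mathbb{M}_{\mathbf{ref}}$.
   Context: Language: fix a finite nonempty set $\mathsf{Agt}$ of agents and a countable set $\mathsf{Prop}$ of propositional variables; $\mathsf{Grp}$ is the set of nonempty subsets of $\mathsf{Agt}$. Formulas: $\alpha::=p\mid\bot\mid\alpha\wedge\alpha\mid\alpha\vee\alpha\mid\alpha\rightarrow\alpha\mid\neg\alpha\mid D_G\alpha$ ($p\in\mathsf{Prop}$, $G\in\mathsf{Grp}$). Outmost-boxed formula: one of the form $D_G\gamma$. Semantics: a model $M=(W,(R_G)_{G\in\mathsf{Grp}},V)$ has a set $W$ of states, binary relations $R_G\subseteq W\times W$ with $R_H\subseteq R_G$ whenever $G\subseteq H$, and $V:\mathsf{Prop}\to\mathcal P(W)$. Truth is classical for connectives and $M,w\models D_G\alpha$ iff $M,v\models\alpha$ for all $v$ with $(w,v)\in R_G$. $\mathbb{M}$ is the class of all models; $\mathbb{M}_{\mathbf{ser}}$ the class of models where $R_{\{a\}}$ is serial for every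 $a\in\mathsf{Agt}$; $\mathbb{M}_{\mathbf{ref}}$ the class where every $R_G$ is reflexive. A sequent $\Gamma\Rightarrow\Delta$ is valid in a class of models if $\bigwedge\Gamma\rightarrow\bigvee\Delta$ is true at every state of every model of the class (empty conjunction is $\top$, empty disjunction is $\bot$). Sequent calculi (sequents $\Gamma\Rightarrow\Delta$ are pairs of finite multisets; derivable = root of a finite tree built from initial sequents by rules): $\mathsf{G}(\mathbf{K}_D)$ has initial sequents $\Gamma,p\Rightarrow p,\Delta$ and $\bot,\Gamma\Rightarrow\Delta$; rules $(R\wedge)$ from $\Gamma\Rightarrow\Delta,\alpha_1$ and $\Gamma\Rightarrow\Delta,\alpha_2$ infer $\Gamma\Rightarrow\Delta,\alpha_1\wedge\alpha_2$; $(L\wedge)$ from $\alpha_1,\alpha_2,\Gamma\Rightarrow\Delta$ infer $\alpha_1\wedge\alpha_2,\Gamma\Rightarrow\Delta$; $(R\vee)$ from $\Gamma\Rightarrow\Delta,\alpha_1,\alpha_2$ infer $\Gamma\Rightarrow\Delta,\alpha_1\vee\alpha_2$; $(L\vee)$ from $\alpha_1,\Gamma\Rightarrow\Delta$ and $\alpha_2,\Gamma\Rightarrow\Delta$ infer $\alpha_1\vee\alpha_2,\Gamma\Rightarrow\Delta$; $(R\rightarrow)$ from $\alpha_1,\Gamma\Rightarrow\Delta,\alpha_2$ infer $\Gamma\Rightarrow\Delta,\alpha_1\rightarrow\alpha_2$; $(L\rightarrow)$ from $\Gamma\Rightarrow\Delta,\alpha_1$ and $\alpha_2,\Gamma\Rightarrow\Delta$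 infer $\alpha_1\rightarrow\alpha_2,\Gamma\Rightarrow\Delta$; $(R\neg)$ from $\alpha,\Gamma\Rightarrow\Delta$ infer $\Gamma\Rightarrow\Delta,\neg\alpha$; $(L\neg)$ from $\Gamma\Rightarrow\Delta,\alpha$ infer $\neg\alpha,\Gamma\Rightarrow\Delta$; $(D_K)$: from $\alpha_1,\dots,\alpha_n\Rightarrow\beta$ ($n\ge0$) infer $\Sigma,D_{G_1}\alpha_1,\dots,D_{G_n}\alpha_n\Rightarrow D_G\beta,\Omega$ where all $G_i\subseteq G$, $\Sigma$ consists only of propositional variables, $\bot$, and $D_H\gamma$ with $H\not\subseteq G$, and $\Omega$ only of propositional variables, $\bot$, outmost-boxed formulas. $\mathsf{G}(\mathbf{KD}_D)$ adds $(D_D)$: from $\Gamma\Rightarrow$ with $\Gamma\neq\emptyset$ infer $\Sigma,D_{\{a\}}\Gamma\Rightarrow\Omega$, $\Sigma$ only propositional variables, $\bot$, $D_H\gamma$ with $H\neq\{a\}$; $\Omega$ only propositional variables, $\bot$, outmost-boxed formulas. $\mathsf{G}(\mathbf{KT}_D)$ adds to $\mathsf{G}(\mathbf{K}_D)$ $(D_T)$: from $D_G\alpha,\alpha,\Gamma\Rightarrow\Delta$ infer $D_G\alpha,\Gamma\Rightarrow\Delta$. $\mathsf{G}^c(\mathbf{L})$ is $\mathsf{G}(\mathbf{L})$ plus the cut rule: from $\Gamma\Rightarrow\Delta,C$ and $C,\Gamma'\Rightarrow\Delta'$ infer $\Gamma,\Gamma'\Rightarrow\Delta,\Delta'$. 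*)

(* Defs.v *)
From mathcomp Require Import all_boot.
From Stdlib Require Import List Permutation.
Set Implicit Arguments. Unset Strict Implicit. Unset Printing Implicit Defensive.

Section Syntax.
Variables (Agt : finType) (PV : Type).

Definition grp := {G : {set Agt} | G != set0}.

Inductive form : Type :=
| Var of PV
| Bot
| And of form & form
| Or of form & form
| Imp of form & form
| Neg of form
| Box of grp & form.

Lemma singleton_nonempty (a : Agt) : [set a] != set0.
Proof. by apply/set0Pn; exists a; rewrite in_set1. Qed.
Definition sgrp (a : Agt) : grp := exist _ [set a] (singleton_nonempty a).

Definition is_outboxed (f : form) : Prop :=
  match f with Box _ _ => True | _ => False end.

Definition omega_ok (f : form) : Prop :=
  match f with Var _ | Bot | Box _ _ => True | _ => False end.

Definition sigmaK_ok (G : grp) (f : form) : Prop :=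
  match f with
  | Var _ | Bot => True
  | Box H _ => ~~ (sval H \subset sval G)
  | _ => False
  end.

Definition sigmaD_ok (a : Agt) (f : form) : Prop :=
  match f with
  | Var _ | Bot => True
  | Box H _ => sval H != [set a]
  | _ => False
  end.

Inductive logic := LK | LKD | LKT.

(* Sequents are pairs of finite multisets, represented as lists closed under
   permutation (rule [d_perm]).  [derivable L] is derivability in G^c(L),
   i.e. the calculus G(L) together with the cut rule. *)
Inductive derivable (L : logic) : list form -> list form -> Prop :=
| d_perm G D G' D' : derivable L G D -> Permutation G G' -> Permutation D D' ->
    derivable L G' D'
| d_id p G D : derivable L (Var p :: G) (Var p :: D)
| d_bot G D : derivable L (Bot :: G) D
| d_Rand G D a b : derivable L G (a :: D) -> derivable L G (b :: D) ->
    derivable L G (And a b :: D)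
| d_Land G D a b : derivable L (a :: b :: G) D -> derivable L (And a b :: G) D
| d_Ror G D a b : derivable L G (a :: b :: D) -> derivable L G (Or a b :: D)
| d_Lor G D a b : derivable L (a :: G) D -> derivable L (b :: G) D ->
    derivable L (Or a b :: G) D
| d_Rimp G D a b : derivable L (a :: G) (b :: D) -> derivable L G (Imp a b :: D)
| d_Limp G D a b : derivable L G (a :: D) -> derivable L (b :: G) D ->
    derivable L (Imp a b :: G) D
| d_Rneg G D a : derivable L (a :: G) D -> derivable L G (Neg a :: D)
| d_Lneg G D a : derivable L G (a :: D) -> derivable L (Neg a :: G) D
(* (D_K): boxed premises given as a list of pairs (G_i, alpha_i) *)
| d_DK (Sg Om : list form) (l : list (grp * form)) (Gr : grp) (b : form) :
    derivable L (map snd l) [:: b] ->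
    (forall p, In p l -> sval p.1 \subset sval Gr) ->
    (forall f, In f Sg -> sigmaK_ok Gr f) ->
    (forall f, In f Om -> omega_ok f) ->
    derivable L (Sg ++ map (fun p => Box p.1 p.2) l) (Box Gr b :: Om)
| d_DD (Sg Om G : list form) (a : Agt) :
    L = LKD ->
    G <> nil ->
    derivable L G nil ->
    (forall f, In f Sg -> sigmaD_ok a f) ->
    (forall f, In f Om -> omega_ok f) ->
    derivable L (Sg ++ map (Box (sgrp a)) G) Om
| d_DT (Gr : grp) a G D :
    L = LKT ->
    derivable L (Box Gr a :: a :: G) D ->
    derivable L (Box Gr a :: G) D
| d_cut G D G' D' C :
    derivable L G (D ++ [:: C]) -> derivable L (C :: G') D' ->
    derivable L (G ++ G') (D ++ D').

Record model := Model {
  W : Type;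
  R : grp -> W -> W -> Prop;
  V : PV -> W -> Prop;
  R_anti : forall G H : grp, sval G \subset sval H ->
           forall w v, R H w v -> R G w v }.

Fixpoint sat (M : model) (w : W M) (f : form) : Prop :=
  match f with
  | Var p => @V M p w
  | Bot => False
  | And a b => @sat M w a /\ @sat M w b
  | Or a b => @sat M w a \/ @sat M w b
  | Imp a b => @sat M w a -> @sat M w b
  | Neg a => ~ @sat M w a
  | Box G a => forall v, @R M G w v -> @sat M v a
  end.

Definition serial_model (M : model) : Prop :=
  forall (a : Agt) (w : W M), exists v, @R M (sgrp a) w v.

Definition reflexive_model (M : model) : Prop :=
  forall (G : grp) (w : W M), @R M G w w.

Definition valid_in (C : model -> Prop) (G D : list form) : Prop :=
  forall M : model, C M -> forall w : W M,
    (forall f, In f G -> @sat M w f) -> exists2 f, In f D & @sat M w f.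

End Syntax.

(* Main.v *)
Require Import Defs.
From mathcomp Require Import all_boot.
From Stdlib Require Import List Permutation Classical.

Section Sound.
Variables (Agt : finType) (PV : Type).

Lemma In_catE (T : Type) (x : T) (s1 s2 : list T) :
  In x (s1 ++ s2) <-> In x s1 \/ In x s2.
Proof.
elim: s1 => [|y s IH] /=; first by intuition.
rewrite IH; tauto.
Qed.

Lemma In_mapE (A B : Type) (f : A -> B) (y : B) (s : list A) :
  In y (map f s) -> exists x, In x s /\ y = f x.
Proof.
elim: s => [|x s IH] //= [<-|H]; first by exists x; auto.
by case: (IH H) => z [? ->]; exists z; auto.
Qed.

Lemma In_mapI (A B : Type) (f : A -> B) (x : A) (s : list A) :
  In x s -> In (f x) (map f s).
Proof. elim: s => [|z s IH] //= [->|H]; auto. Qed.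

Lemma sound (L : logic) (C : model Agt PV -> Prop)
  (hD : L = LKD -> forall M, C M -> serial_model M)
  (hT : L = LKT -> forall M, C M -> reflexive_model M)
  (G D : list (form Agt PV)) :
  derivable L G D -> valid_in C G D.
Proof.
move=> der; elim: der => {G D}.
- move=> G D G' D' _ IH pG pD M CM w Hw.
  case: (IH M CM w) => [f Hf|f Hf Hs].
    by apply: Hw; apply: Permutation_in Hf.
  by exists f => //; apply: Permutation_in Hf.
- move=> p G D M CM w Hw; exists (Var _ p); first by left.
  by apply: Hw; left.
- move=> G D M CM w Hw; case: (Hw (Bot _ _)); by [left|].
- move=> G D a b _ IH1 _ IH2 M CM w Hw.
  case: (IH1 M CM w Hw) => f [<-|Hf] Hs; last by exists f; [right|].
  case: (IH2 M CM w Hw) => g [<-|Hg] Hs'; last by exists g; [right|].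
  by exists (And a b); [left|split].
- move=> G D a b _ IH M CM w Hw; apply: IH => // f [<-|[<-|Hf]].
  + by case: (Hw (And a b)); [left|].
  + by case: (Hw (And a b)); [left|].
  + by apply: Hw; right.
- move=> G D a b _ IH M CM w Hw.
  case: (IH M CM w Hw) => f [<-|[<-|Hf]] Hs.
  + by exists (Or a b); [left|left].
  + by exists (Or a b); [left|right].
  + by exists f; [right|].
- move=> G D a b _ IH1 _ IH2 M CM w Hw.
  case: (Hw (Or a b)); [by left| move=> Ha | move=> Hb].
  + by apply: IH1 => // f [<-|Hf] //; apply: Hw; right.
  + by apply: IH2 => // f [<-|Hf] //; apply: Hw; right.
- move=> G D a b _ IH M CM w Hw.
  case: (classic (sat w a)) => Ha.
    case: (IH M CM w) => [f [<-|Hf] //|f [<-|Hf] Hs]; first by apply: Hw.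
      by exists (Imp a b); [left|].
    by exists f; [right|].
  by exists (Imp a b); [left| move=> /Ha].
- move=> G D a b _ IH1 _ IH2 M CM w Hw.
  case: (IH1 M CM w) => [f Hf|f [<-|Hf] Hs]; first by apply: Hw; right.
    apply: IH2 => // g [<-|Hg]; last by apply: Hw; right.
    by apply: (Hw (Imp a b)); [left|].
  by exists f.
- move=> G D a _ IH M CM w Hw.
  case: (classic (sat w a)) => Ha.
    case: (IH M CM w) => [f [<-|Hf] //|f Hf Hs]; first by apply: Hw.
    by exists f; [right|].
  by exists (Neg a); [left|].
- move=> G D a _ IH M CM w Hw.
  case: (IH M CM w) => [f Hf|f [<-|Hf] Hs]; first by apply: Hw; right.
    by case: (Hw (Neg a)); [left|].
  by exists f.
- move=> Sg Om l Gr b _ IH Hsub _ _ M CM w Hw.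
  exists (Box Gr b); first by left.
  move=> v Rv.
  case: (IH M CM v) => [f Hf|f [<-|[]] //].
  case: (@In_mapE _ _ _ _ _ Hf) => p [Hp ->].
  have := Hw (Box p.1 p.2).
  rewrite /= In_catE; apply; first by right; exact: (@In_mapI _ _ (fun p : grp Agt * form Agt PV => Box p.1 p.2) p l Hp).
  exact: (R_anti (Hsub p Hp) Rv).
- move=> Sg Om G a HL _ _ IH _ _ M CM w Hw.
  case: (hD HL M CM a w) => v Rv.
  case: (IH M CM v) => [f Hf|f []].
  have := Hw (Box (sgrp a) f).
  rewrite In_catE; apply; last exact: Rv.
  by right; apply: (@In_mapI _ _ (Box (sgrp a))).
- move=> Gr a G D HL _ IH M CM w Hw.
  apply: IH => // f [<-|[<-|Hf]].
  + by apply: Hw; left.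
  + by apply: (Hw (Box Gr a)); [left| apply: (hT HL M CM)].
  + by apply: Hw; right.
- move=> G D G' D' Cf _ IH1 _ IH2 M CM w Hw.
  case: (IH1 M CM w) => [f Hf|f].
    by apply: Hw; rewrite In_catE; left.
  rewrite In_catE => -[Hf Hs|[<-|[]] Hs].
    by exists f => //; rewrite In_catE; left.
  case: (IH2 M CM w) => [g [<-|Hg] //|g Hg Hs'].
    by apply: Hw; rewrite In_catE; right.
  by exists g => //; rewrite In_catE; right.
Qed.

End Sound.

Theorem theorem4p1 (Agt : finType) (PV : Type) (hAgt : 0 < #|Agt|)
  (Gamma Delta : list (form Agt PV)) :
  (derivable LK Gamma Delta -> valid_in (fun _ => True) Gamma Delta) /\
  (derivable LKD Gamma Delta -> valid_in (@serial_model Agt PV) Gamma Delta) /\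
  (derivable LKT Gamma Delta -> valid_in (@reflexive_model Agt PV) Gamma Delta).
Proof.
split; [|split]; apply: sound => //.
Qed.
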